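(* Let $(Q,\cdot)$ be a Ward quasigroup with $xx=e$ for all $x\in Q$. Define $x\star y=(e\cdot x)\cdot y$. Then $(Q,\star)$ is a quasigroup satisfying $((e\star e)\star(x\star z))\star((e\star y)\star z)=x\star y$ for all $x,y,z\in Q$, i.e. $(Q,\star,e)$ is a double Ward quasigroup.
   Context: A quasigroup is a magma in which $ax=b$ and $ya=b$ have unique solutions for all $a,b$. A Ward quasigroup is a quasigroup satisfying $(xz)(yz)=xy$ for all $x,y,z$; in it there is $e$ with $xx=e$ for all $x$. A double Ward quasigroup $(Q,\cdot,e)$ is a quasigroup with an element $e$ such that $(ee\cdot xz)(ey\cdot z)=xy$ for all $x,y,z$. *)

(* Defs.v *)
Definition quasigroup {Q : Type} (mul : Q -> Q -> Q) : Prop :=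
  (forall a b : Q, exists! x : Q, mul a x = b) /\
  (forall a b : Q, exists! y : Q, mul y a = b).

Definition ward_quasigroup {Q : Type} (mul : Q -> Q -> Q) : Prop :=
  quasigroup mul /\
  (forall x y z : Q, mul (mul x z) (mul y z) = mul x y).

Definition double_ward_quasigroup {Q : Type} (mul : Q -> Q -> Q) (e : Q) : Prop :=
  quasigroup mul /\
  (forall x y z : Q,
     mul (mul (mul e e) (mul x z)) (mul (mul e y) z) = mul x y).

(* Main.v *)
Require Import Defs.

Theorem proposition4p2 (Q : Type) (mul : Q -> Q -> Q) (e : Q) :
  ward_quasigroup mul ->
  (forall x : Q, mul x x = e) ->
  double_ward_quasigroup (fun x y => mul (mul e x) y) e.
Proof.
  intros [[HL HR] W] Hsq.
  assert (Hre : forall u, mul u e = u).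
  { intro u. destruct (HR u u) as [y [Hy _]].
    destruct (HL u u) as [v [Hv _]].
    rewrite <- (Hsq v). transitivity (mul (mul u v) (mul v v)).
    { rewrite Hv. reflexivity. } rewrite W. exact Hv. }
  assert (HA : forall x y, mul e (mul y x) = mul x y).
  { intros x y. rewrite <- (Hsq x). apply W. }
  assert (Hinv : forall u, mul e (mul e u) = u).
  { intro u. destruct (HL u u) as [v [Hv _]]. rewrite <- Hv.
    rewrite (HA v u), HA. reflexivity. }
  assert (Hee : mul e e = e) by apply Hsq.
  split; [split|].
  - intros a b. apply (HL (mul e a) b).
  - intros a b. destruct (HR a b) as [w [Hw Hu]].
    exists (mul e w). split.
    + simpl. rewrite Hinv. exact Hw.
    + intros y Hy. rewrite <- (Hinv y). f_equal. apply Hu. exact Hy.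
  - intros x y z. simpl.
    rewrite Hee, Hre, Hee, !Hinv. apply W.
Qed.
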